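(* The monoid $\operatorname{NDPF}^{(1)}_N$ is $\mathcal{J}$-trivial.
   Context: $\operatorname{NDPF}^{(1)}_N$ is the set of functions $f:\mathbb{Z}\to\mathbb{Z}$ that are regressive ($f(i)\le i$), order preserving and skew periodic ($f(i+N)=f(i)+N$), excluding the shift functions $i\mapsto i-t$ with $t\ne 0$, a monoid under composition. A monoid $M$ is $\mathcal J$-trivial if for $f,g\in M$, $MfM=MgM$ implies $f=g$. *)

(* Defs.v *)
From Stdlib Require Import ZArith.
Open Scope Z_scope.

Definition regressive (f : Z -> Z) : Prop := forall i, f i <= i.

Definition order_preserving (f : Z -> Z) : Prop := forall i j, i <= j -> f i <= f j.

Definition skew_periodic (N : Z) (f : Z -> Z) : Prop := forall i, f (i + N) = f i + N.

Definition is_nontrivial_shift (f : Z -> Z) : Prop :=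
  exists t, t <> 0 /\ forall i, f i = i - t.

Definition NDPF1 (N : Z) (f : Z -> Z) : Prop :=
  regressive f /\ order_preserving f /\ skew_periodic N f /\ ~ is_nontrivial_shift f.

Definition in_two_sided_ideal (N : Z) (f h : Z -> Z) : Prop :=
  exists a b, NDPF1 N a /\ NDPF1 N b /\ forall i, h i = a (f (b i)).

Definition NDPF1_J_trivial (N : Z) : Prop :=
  forall f g, NDPF1 N f -> NDPF1 N g ->
    (forall h, in_two_sided_ideal N f h <-> in_two_sided_ideal N g h) ->
    forall i, f i = g i.

(* Main.v *)
Require Import Defs.
From Stdlib Require Import ZArith Lia.
Open Scope Z_scope.

Lemma id_NDPF1 (N : Z) : NDPF1 N (fun i => i).
Proof.
  repeat split.
  - intro i; lia.
  - intros i j H; exact H.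
  - intros [t [Ht H]]. specialize (H 0). lia.
Qed.

Lemma self_ideal (N : Z) f : in_two_sided_ideal N f f.
Proof. exists (fun i => i), (fun i => i). split; [apply id_NDPF1|split; [apply id_NDPF1|reflexivity]]. Qed.

Lemma le_of_ideal (N : Z) f g : NDPF1 N g -> in_two_sided_ideal N g f -> forall i, f i <= g i.
Proof.
  intros [_ [Hg _]] [a [b [[Ha _] [[Hb _] H]]]] i.
  rewrite H. specialize (Ha (g (b i))). specialize (Hg (b i) i (Hb i)). lia.
Qed.

Theorem mainTheorem7 (N : Z) (hN : 1 <= N) : NDPF1_J_trivial N.
Proof.
  intros f g Hf Hg H i.
  assert (H1 := le_of_ideal N f g Hg (proj1 (H f) (self_ideal N f)) i).
  assert (H2 := le_of_ideal N g f Hf (proj2 (H g) (self_ideal N g)) i).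
  lia.
Qed.
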